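(* Let $n\in\mathbb{N}$ and let $k=k(n)$ be a positive integer with $k(n)\to\infty$ as $n\to\infty$. Generate $n$ binary strings $\mathbf{s}_1,\dots,\mathbf{s}_n$, each of length $k$, independently and uniformly at random. For a fixed $i$ and each $j\neq i$, let $X_{ij}$ be the number of bits of $\mathbf{s}_j$ read when $\mathbf{s}_j$ is compared with $\mathbf{s}_i$ by reading bit-by-bit from left to right until the first position where $\mathbf{s}_j$ differs from $\mathbf{s}_i$ (inclusive of that position); if $\mathbf{s}_j=\mathbf{s}_i$ then all $k$ bits are read. Let $X_i=\sum_{j\neq i}X_{ij}$ and $X=\max_i X_i$. Then $X\lesssim 2n$, i.e. for all $\varepsilon_1,\varepsilon_2>0$ and all sufficiently large $n$, $\mathbb{P}\left(\frac{X}{2n}<1+\varepsilon_1\right)>1-\varepsilon_2$. *)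

(* Defs.v *)
From HB Require Import structures.
From mathcomp Require Import all_boot all_order all_algebra.
From mathcomp Require Import reals.
Set Implicit Arguments. Unset Strict Implicit. Unset Printing Implicit Defensive.
Import Order.TTheory GRing.Theory Num.Theory.

Definition bstring (k : nat) := {ffun 'I_k -> bool}.

Definition cmp_cost (k : nat) (a b : bstring k) : nat :=
  if a == b then k else (find (fun p : 'I_k => a p != b p) (enum 'I_k)).+1.

Definition Xi (n k : nat) (s : {ffun 'I_n -> bstring k}) (i : 'I_n) : nat :=
  \sum_(j < n | j != i) cmp_cost (s i) (s j).

Definition Xmax (n k : nat) (s : {ffun 'I_n -> bstring k}) : nat :=
  \max_(i < n) Xi s i.

Definition unif_prob (R : realType) (n k : nat)
    (E : {ffun 'I_n -> bstring k} -> bool) : R :=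
  (#|[set s | E s]|%:R / #|{: {ffun 'I_n -> bstring k}}|%:R)%R.

(* Main.v *)
Require Import Defs.
From HB Require Import structures.
From mathcomp Require Import all_boot all_order all_algebra.
From mathcomp Require Import reals.
From mathcomp Require Import ring lra.
Import Order.TTheory GRing.Theory Num.Theory.
Set Implicit Arguments. Unset Strict Implicit.

Definition agree k (t : nat) (a b : bstring k) : bool :=
  [forall p : 'I_k, (p < t)%N ==> (a p == b p)].

Lemma cost_ge1 k (a b : bstring k) : (0 < k)%N -> (1 <= cmp_cost a b)%N.
Proof. by rewrite /cmp_cost; case: ifP. Qed.

Lemma cost_le k (a b : bstring k) : (cmp_cost a b <= k)%N.
Proof.
rewrite /cmp_cost; case: eqP => // /eqP neq.
have : has (fun p : 'I_k => a p != b p) (enum 'I_k).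
  have : ~~ [forall p, a p == b p].
    by apply: contra neq => /forallP h; apply/eqP/ffunP => p; apply/eqP/h.
  rewrite negb_forall => /existsP [p hp].
  by apply/hasP; exists p; first by rewrite mem_enum.
by rewrite has_find size_enum_ord.
Qed.

Lemma cost_agree k (a b : bstring k) (t : nat) :
  (t < cmp_cost a b)%N -> agree t a b.
Proof.
rewrite /cmp_cost /agree; case: eqP => [-> _|_ ht].
  by apply/forallP => p; apply/implyP.
apply/forallP => p; apply/implyP => hp.
have hf : (p < find (fun p : 'I_k => a p != b p) (enum 'I_k))%N.
  by apply: leq_trans hp _; rewrite -ltnS.
have := before_find p hf.
have -> : nth p (enum 'I_k) p = p by apply/val_inj; rewrite /= nth_enum_ord.
by move/negbFE.
Qed.

Lemma card_agree k (t : nat) (a : bstring k) : (t <= k)%N ->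
  #|[pred b : bstring k | agree t a b]| = (2 ^ (k - t))%N.
Proof.
move=> htk.
pose F := fun p : 'I_k => (if (p < t)%N then (fun y : bool => y == a p) else (fun _ => true)) : pred bool.
have HFp : forall p y, (y \in F p) = ((p < t)%N ==> (y == a p)).
  by move=> p y; rewrite /F; case: ifP => _; rewrite unfold_in.
have -> : #|[pred b : bstring k | agree t a b]| = #|family F|.
  apply: eq_card => b; rewrite !inE /agree; apply/forallP/familyP => h p.
    by have := h p; rewrite HFp eq_sym.
  by have := h p; rewrite HFp eq_sym.
rewrite card_family.
have -> : foldr muln 1 [seq #|F x| | x : 'I_k] = \prod_(x < k) #|F x|.
  have E : forall s : seq 'I_k, foldr muln 1 [seq #|F x| | x <- s] = \prod_(x <- s) #|F x|.
    by elim => [|x s IH]; rewrite ?big_nil ?big_cons //= IH.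
  by rewrite /image_mem E big_enum.
have HF : forall x : 'I_k, #|F x| = if (x < t)%N then 1%N else 2%N.
  move=> x; rewrite /F; case: ifP => _.
    by rewrite cardE /enum_mem -enumT /=; case: (a x); rewrite /= ?enumT unlock.
  by rewrite cardE /enum_mem -enumT /= enumT unlock.
under eq_bigr do rewrite HF.
rewrite -(big_mkord xpredT (fun x => if (x < t)%N then 1%N else 2%N)).
rewrite (big_cat_nat (leq0n t) htk) /=.
rewrite big_nat_cond big1 ?mul1n; last by move=> i /andP[/andP[_ ->]].
rewrite big_nat_cond (eq_bigr (fun _ => 2%N)); last first.
  by move=> i /andP[/andP[h _] _]; rewrite ltnNge h.
by rewrite -big_nat_cond prod_nat_const_nat.
Qed.

Local Open Scope ring_scope.

Section R2.
Variable R : realType.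

Lemma geo (x : R) m : (1 <= m)%N -> (x - 1) * \sum_(1 <= t < m) x ^+ t = x ^+ m - x.
Proof.
elim: m => // m IH; rewrite ltnS leq_eqVlt => /orP [/eqP <-|hm].
  by rewrite big_geq // mulr0 expr1 subrr.
rewrite big_nat_recr //= mulrDr IH // exprS; ring.
Qed.

Lemma cost_pow k (a b : bstring k) (d : R) : 1 <= d -> (0 < k)%N ->
  d ^+ cmp_cost a b <= d + (d - 1) * \sum_(1 <= t < k) (if agree t a b then d ^+ t else 0).
Proof.
move=> d1 k0; set c := cmp_cost a b.
have c1 : (1 <= c)%N by apply: cost_ge1.
have ck : (c <= k)%N by apply: cost_le.
have -> : d ^+ c = d + (d - 1) * \sum_(1 <= t < c) d ^+ t by rewrite geo //; ring.
rewrite lerD2l ler_wpM2l ?subr_ge0 //.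
rewrite (big_cat_nat c1 ck) /= [X in _ <= X + _]big_nat_cond [X in _ <= _ + X]big_nat_cond.
rewrite [X in X <= _]big_nat_cond -[X in X <= _]addr0.
apply: lerD.
  apply: ler_sum => t /andP [/andP [_ ht] _].
  by rewrite cost_agree.
by apply: sumr_ge0 => t _; case: ifP => // _; rewrite exprn_ge0 // (le_trans ler01).
Qed.

Lemma sum_pair k (a : bstring k) (d : R) : 1 <= d -> d < 2 -> (0 < k)%N ->
  \sum_(b : bstring k) d ^+ cmp_cost a b <= (2 ^ k)%:R * (d / (2 - d)).
Proof.
move=> d1 d2 k0.
apply: le_trans (ler_sum _ (fun b _ => cost_pow a b d1 k0)) _.
rewrite big_split /= sumr_const.
have cB : #|bstring k| = (2 ^ k)%N by rewrite card_ffun card_bool card_ord.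
rewrite cB -mulr_sumr exchange_big /=.
have E : forall t, (1 <= t < k)%N ->
   \sum_(b : bstring k) (if agree t a b then d ^+ t else 0) = (2 ^ k)%:R * (d / 2) ^+ t.
  move=> t /andP [_ tk].
  rewrite -big_mkcond /=.
  have := sumr_const [pred b : bstring k | agree t a b] (d ^+ t).
  rewrite (card_agree a (ltnW tk)) => ->.
  have hk : k = (k - t + t)%N by rewrite subnK // ltnW.
  rewrite [in RHS]hk expnD natrM -[LHS]mulr_natr !natrX expr_div_n.
  by field; rewrite expf_neq0 // pnatr_eq0.
rewrite big_nat_cond (eq_bigr (fun t => (2 ^ k)%:R * (d / 2) ^+ t)); last first.
  by move=> t /andP [h _]; exact: E.
rewrite -big_nat_cond -mulr_sumr.
set S := \sum_(1 <= t < k) _.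
have hS := geo (d / 2) k0.
have hx : 0 <= (d / 2) ^+ k by rewrite exprn_ge0 // divr_ge0 // (le_trans ler01).
have S0 : 0 <= S by apply: sumr_ge0 => t _; rewrite exprn_ge0 // divr_ge0 // (le_trans ler01).
have e : (2 - d) * S = d - 2 * (d / 2) ^+ k.
  have -> : 2 - d = -2 * (d / 2 - 1) by field.
  by rewrite -mulrA hS; field.
have hS2 : (2 - d) * S <= d by rewrite e; lra.
set K := (2 ^ k)%:R : R.
have K0 : 0 < K by rewrite ltr0n expn_gt0.
have -> : d *+ 2 ^ k = K * d by rewrite /K mulr_natl.
have h2d : 0 < 2 - d by lra.
have -> : K * d + (d - 1) * (K * S) = K * (d + (d - 1) * S) by ring.
rewrite ler_pM2l // ler_pdivlMr //.
nra.
Qed.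

Lemma prod_bound n k (i : 'I_n) (F : bstring k -> bstring k -> R) (M : R) :
  (forall a b, 0 <= F a b) -> (forall a, \sum_b F a b <= M) ->
  \sum_(s : {ffun 'I_n -> bstring k}) \prod_(j | j != i) F (s i) (s j)
    <= #|bstring k|%:R * M ^+ n.-1.
Proof.
move=> F0 FM.
pose G a j b := if j == i then (if b == a then 1 else 0) else F a b.
have E1 : forall s : {ffun 'I_n -> bstring k},
    \prod_(j | j != i) F (s i) (s j) = \sum_a \prod_j G a j (s j).
  move=> s; symmetry; rewrite (bigD1 (s i)) //=.
  rewrite [X in _ + X]big1 ?addr0; last first.
    move=> a ha; rewrite (bigD1 i) //= /G eqxx.
    by rewrite eq_sym (negbTE ha) mul0r.
  rewrite [in LHS](bigD1 i) //= /G !eqxx mul1r; apply: eq_bigr => j hj.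
  by rewrite (negbTE hj).
rewrite (eq_bigr _ (fun s _ => E1 s)) exchange_big /=.
have E2 : forall a, \sum_(s : {ffun 'I_n -> bstring k}) \prod_j G a j (s j)
    = \prod_(j | j != i) \sum_b F a b.
  move=> a; rewrite -bigA_distr_bigA /= (bigD1 i) //= /G eqxx.
  rewrite (bigD1 a) //= eqxx big1 ?addr0 ?mul1r.
    by apply: eq_bigr => j hj; rewrite (negbTE hj).
  by move=> b hb; rewrite (negbTE hb).
rewrite (eq_bigr _ (fun a _ => E2 a)).
have M0 : 0 <= M.
  have := FM ([ffun => false] : bstring k); apply: le_trans.
  by apply: sumr_ge0 => b _.
have P : forall a : bstring k, \prod_(j | j != i) \sum_b F a b <= M ^+ n.-1.
  move=> a; have -> : M ^+ n.-1 = \prod_(j | j != i) M.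
    by rewrite prodr_const cardC1 card_ord.
  by apply: ler_prod => j _; rewrite FM sumr_ge0.
apply: le_trans (ler_sum _ (fun a _ => P a)) _.
by rewrite sumr_const mulr_natl.
Qed.
End R2.

Section R3.
Variable R : realType.

Lemma bern (x : R) m : -1 <= x -> 1 + m%:R * x <= (1 + x) ^+ m.
Proof.
move=> hx; elim: m => [|m IH]; first by rewrite expr0 mul0r addr0.
rewrite exprS -natr1.
have h1 : 0 <= 1 + x by lra.
have := ler_wpM2l h1 IH.
have : 0 <= m%:R * x * x by rewrite -mulrA mulr_ge0 ?ler0n // -expr2 sqr_ge0.
nra.
Qed.

Lemma quad (a : R) m : 0 <= a ->
  2 + 2 * m%:R * a + m%:R * (m%:R - 1) * a ^+ 2 <= 2 * (1 + a) ^+ m.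
Proof.
move=> ha; elim: m => [|m IH]; first by rewrite expr0 mulr1; nra.
rewrite exprS -natr1.
have h1 : 0 <= 1 + a by lra.
have := ler_wpM2l h1 IH.
set y := m%:R.
have y0 : 0 <= y by rewrite ler0n.
have : 0 <= y * (y - 1) * a ^+ 3.
  rewrite mulr_ge0 ?exprn_ge0 // /y; case: (m) => [|m']; first by rewrite mul0r.
  by rewrite mulr_ge0 // -natr1 addrK.
rewrite !exprS expr0 !mulr1 => h3 h4. rewrite mulrA -/y in h4 *.
nra.
Qed.

Lemma grow (A e : R) : 1 < A -> 0 < e ->
  exists N : nat, forall n : nat, (N <= n)%N -> n%:R < e * A ^+ n.-1.
Proof.
move=> A1 e0; set a := A - 1.
have a0 : 0 < a by rewrite /a subr_gt0.
set B := 4 / (e * a ^+ 2).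
have ea : 0 < e * a ^+ 2 by rewrite mulr_gt0 // exprn_gt0.
have B0 : 0 <= B by rewrite /B divr_ge0 // ltW.
exists (Num.Def.archi_bound B + 4)%N => n hn.
set m := n.-1.
have hnm : n = m.+1 by rewrite /m prednK // (leq_trans _ hn) // addn4.
have hm : (Num.Def.archi_bound B + 3 <= m)%N by move: hn; rewrite hnm addn4 addn3 ltnS.
have Bm : B < m%:R.
  apply: lt_le_trans (archi_boundP B0) _; rewrite ler_nat.
  by apply: leq_trans hm; rewrite leq_addr.
have m3 : 3%:R <= m%:R :> R by rewrite ler_nat (leq_trans _ hm) // leq_addl.
have hq := quad m (ltW a0).
have -> : A = 1 + a by rewrite /a; ring.
rewrite hnm -/m -natr1.
set y := m%:R in Bm m3 hq *.
have : 4 < e * a ^+ 2 * y.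
  by rewrite -ltr_pdivrMl // mulrC.
set P := (1 + a) ^+ m in hq *.
have P0 : 0 <= P by rewrite exprn_ge0 //; lra.
have : 0 <= y * a. by rewrite mulr_ge0 // ltW.
nra.
Qed.

Lemma choose_c (q : nat) : (1 <= q)%N ->
  exists c : R, [/\ 1 <= c, c ^+ q < 2 & 1 < c ^+ q * c * (2 - c ^+ q)].
Proof.
move=> q1.
set Q : R := q%:R.
have Q1 : 1 <= Q by rewrite /Q ler1n.
set h : R := 1 / (4 * Q * (Q + 1)).
have D0 : 0 < 4 * Q * (Q + 1) by apply: mulr_gt0; [apply: mulr_gt0|]; lra.
have hD : h * (4 * Q * (Q + 1)) = 1 by rewrite /h mulrC mulrA mulr1 divff // gt_eqF.
have h0 : 0 < h by rewrite /h divr_gt0.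
set u := Q * h.
have u18 : u <= 1/8.
  have : u * (8 * (Q + 1)) = 2 * (h * (4 * Q * (Q + 1))) by rewrite /u; ring.
  rewrite hD; nra.
have h1 : h <= u by rewrite /u; nra.
exists (1 + h); set c := 1 + h; set d := c ^+ q.
have c1 : 1 <= c by rewrite /c; lra.
have d0 : 0 <= d by rewrite /d exprn_ge0 //; lra.
have F1 : d * (1 - u) <= 1.
  have b1 := @bern (- h) q ltac:(lra).
  have e : d * (1 + - h) ^+ q = (1 - h ^+ 2) ^+ q.
    by rewrite /d /c -exprMn; congr (_ ^+ _); ring.
  have : (1 - h ^+ 2) ^+ q <= 1.
    apply: exprn_ile1; last by have := sqr_ge0 h; lra.
    rewrite expr2; nra.
  rewrite -e => hle.
  apply: le_trans hle; apply: ler_wpM2l => //.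
  by move: b1; rewrite /u -/Q; lra.
have F2 : 1 + (Q + 1) * h <= d * c.
  rewrite /d -exprSr /c; have := @bern h q.+1 ltac:(lra).
  by rewrite -natr1 -/Q.
have uv : u * ((Q + 1) * h) = h / 4.
  rewrite /u; apply: (@mulIf _ 4); first by rewrite pnatr_eq0.
  rewrite divfK ?pnatr_eq0 //.
  transitivity (h * (h * (4 * Q * (Q + 1)))); first ring.
  by rewrite hD mulr1.
split => //.
  nra.
have G1 : 1 - 2 * u <= (2 - d) * (1 - u).
  have -> : (2 - d) * (1 - u) = 2 - 2 * u - d * (1 - u) by ring.
  lra.
have G2 : (1 - 2 * u) * (1 + (Q + 1) * h) <= (2 - d) * (1 - u) * (d * c).
  apply: ler_pM => //; nra.
have G3 : (1 - u) < (1 - 2 * u) * (1 + (Q + 1) * h).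
  have -> : (1 - 2 * u) * (1 + (Q + 1) * h) = 1 - u + h - 2 * (u * ((Q + 1) * h)).
    by rewrite /u; ring.
  rewrite uv; lra.
have : (1 - u) * 1 < (1 - u) * (d * c * (2 - d)).
  rewrite mulr1; apply: lt_le_trans G3 _; apply: le_trans G2 _; rewrite le_eqVlt; apply/orP; left; apply/eqP; ring.
rewrite ltr_pM2l //; lra.
Qed.
End R3.

Unset Implicit Arguments. Set Strict Implicit.

Theorem lemma2p2 (R : realType) (k : nat -> nat)
    (kpos : forall n, (0 < k n)%N)
    (kinf : forall M : nat, exists N : nat, forall n : nat, (N <= n)%N -> (M <= k n)%N)
    (eps1 eps2 : R) (he1 : 0 < eps1) (he2 : 0 < eps2) :
  exists N : nat, forall n : nat, (N <= n)%N ->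
    1 - eps2 < unif_prob R
      (fun s : {ffun 'I_n -> bstring (k n)} =>
         (Xmax s)%:R / (2 * n)%:R < 1 + eps1).
Proof.
have B0 : 0 <= 1 / (2 * eps1) by rewrite divr_ge0 // ltW // mulr_gt0.
set b := Num.Def.archi_bound (1 / (2 * eps1)).
have hb := archi_boundP B0; rewrite -/b in hb.
set q := b.+1.
have q1 : (1 <= q)%N by [].
have e0 : 0 < 2 * eps1 by rewrite mulr_gt0.
have hq : 1 <= 2 * eps1 * q%:R.
  move: hb; rewrite ltr_pdivrMr // /q -natr1 => hb.
  have : 0 <= b%:R :> R by [].
  nra.
have [c [c1 dlt2 A1]] := choose_c R q1.
set d := c ^+ q in dlt2 A1.
set A := d * c * (2 - d) in A1.
have [N HN] := grow A1 he2.
exists N.+1 => n hn.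
have n0 : (0 < n)%N by apply: leq_trans hn.
set K := k n.
have K0 : (0 < K)%N := kpos n.
set g := d / (2 - d).
set C := c ^+ (2 * q + 1).
have d0 : 0 < d by rewrite exprn_gt0 //; lra.
have dd : 0 < 2 - d by lra.
have gA : g * A = C.
  have -> : C = d * d * c by rewrite /C exprD expr1 mulnC exprM expr2.
  by rewrite /g /A; field; rewrite gt_eqF.
pose bad := fun (i : 'I_n) (s : {ffun 'I_n -> bstring K}) => ((2 * q + 1) * n <= q * Xi s i)%N.
have cB : #|bstring K| = (2 ^ K)%N by rewrite card_ffun card_bool card_ord.
have SB : forall i, #|[pred s | bad i s]|%:R * C ^+ n <= (2 ^ K)%:R * ((2 ^ K)%:R * g) ^+ n.-1.
  move=> i.
  have E := sumr_const [pred s | bad i s] (C ^+ n).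
  rewrite -mulr_natl in E; rewrite -E.
  rewrite big_mkcond /=.
  have L1 : \sum_(s : {ffun 'I_n -> bstring K}) (if bad i s then C ^+ n else 0) <=
      \sum_(s : {ffun 'I_n -> bstring K}) \prod_(j | j != i) d ^+ cmp_cost (s i) (s j).
    apply: ler_sum => s _; case: ifP => hbad; last first.
      by apply: prodr_ge0 => j _; rewrite exprn_ge0 // ltW.
    rewrite prodrXr /d -exprM /C -exprM.
    exact: (ler_weXn2l c1 hbad).
  apply: le_trans L1 _.
  rewrite -cB.
  apply: (@prod_bound R n K i (fun a b => d ^+ cmp_cost a b) (#|bstring K|%:R * g)).
    by move=> a b'; rewrite exprn_ge0 // ltW.
  by move=> a; rewrite cB; apply: sum_pair => //; rewrite /d exprn_ege1.
set E := (fun s : {ffun 'I_n -> bstring K} => (Xmax s)%:R / (2 * n)%:R < 1 + eps1).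
have PA : forall s, (1 <= E s + \sum_i (bad i s : nat))%N.
  move=> s; case: (boolP (E s)) => // nE.
  have [i0 hi0] := @bigop.eq_bigmax _ (fun i => Xi s i) (ltac:(by rewrite card_ord)).
  case: (boolP (bad i0 s)) => hbd.
    by rewrite (bigD1 i0) //= hbd.
  exfalso; move/negP: nE; apply.
  have hx : (q * Xmax s < (2 * q + 1) * n)%N by rewrite /Xmax hi0 ltnNge.
  have hxr : q%:R * (Xmax s)%:R < (2 * q%:R + 1) * n%:R :> R.
    by move: hx; rewrite -(ltr_nat R) !natrM natrD natrM.
  have n0r : 0 < n%:R :> R by rewrite ltr0n.
  rewrite /E ltr_pdivrMr ?natrM ?mulr_gt0 //.
  have q0 : 0 < q%:R :> R by rewrite ltr0n.
  set X := (Xmax s)%:R in hxr *.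
  have : q%:R * X < q%:R * ((1 + eps1) * (2 * n%:R)).
    apply: lt_le_trans hxr _; nra.
  by rewrite ltr_pM2l.
have cT : #|{: {ffun 'I_n -> bstring K}}| = ((2 ^ K) ^ n)%N by rewrite card_ffun cB card_ord.
have cT' : #|{: {ffun 'I_n -> bstring K}}| = (\sum_(s : {ffun 'I_n -> bstring K}) 1)%N by rewrite sum1_card.
have cG : #|[set s | E s]| = (\sum_(s : {ffun 'I_n -> bstring K}) (E s : nat))%N.
  rewrite -sum1_card big_mkcond /=; apply: eq_bigr => s _.
  by rewrite inE; case: (E s).
have cBi : forall i, #|[pred s | bad i s]| = (\sum_(s : {ffun 'I_n -> bstring K}) (bad i s : nat))%N.
  move=> i; rewrite -sum1_card big_mkcond /=; apply: eq_bigr => s _.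
  by rewrite unfold_in; case: (bad i s).
have tot : (#|{: {ffun 'I_n -> bstring K}}| <= #|[set s | E s]| + \sum_i #|[pred s | bad i s]|)%N.
  rewrite cT' cG; under eq_bigr do rewrite cBi.
  rewrite exchange_big -big_split /=.
  by apply: leq_sum => s _; apply: PA.
rewrite /unif_prob.
set T := #|{: {ffun 'I_n -> bstring K}}| in cT cT' tot *.
set G := #|[set s | E s]| in cG tot *.
set P := (2 ^ K)%:R : R in SB.
have P0 : 0 < P by rewrite /P ltr0n expn_gt0.
have TR : T%:R = P ^+ n :> R by rewrite cT natrX.
have T0 : 0 < T%:R :> R by rewrite TR exprn_gt0.
have C1 : 1 <= C by rewrite /C exprn_ege1.
have Cn0 : 0 < C ^+ n by rewrite exprn_gt0 //; lra.
have g0 : 0 < g by rewrite /g divr_gt0.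
rewrite ltr_pdivlMr //.
have totR : T%:R <= G%:R + \sum_i (#|[pred s | bad i s]|)%:R :> R.
  by rewrite -natr_sum -natrD ler_nat.
set W := P * (P * g) ^+ n.-1 in SB.
have Bb : forall i, (#|[pred s | bad i s]|)%:R <= W / C ^+ n :> R.
  by move=> i; rewrite ler_pdivlMr //; apply: SB.
have sumB : \sum_i (#|[pred s | bad i s]|)%:R <= n%:R * (W / C ^+ n) :> R.
  apply: le_trans (ler_sum _ (fun i _ => Bb i)) _.
  by rewrite sumr_const card_ord mulr_natl.
have key : n%:R * (W / C ^+ n) < eps2 * T%:R.
  set m := n.-1 in HN *.
  have nm : n = m.+1 by rewrite /m prednK.
  have HNn : n%:R < eps2 * A ^+ m.
    exact: HN (ltnW hn).
  have gm0 : 0 < g ^+ m by rewrite exprn_gt0.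
  have k1 : n%:R * g ^+ m < eps2 * C ^+ n.
    have L : n%:R * g ^+ m < eps2 * A ^+ m * g ^+ m by rewrite ltr_pM2r.
    apply: lt_le_trans L _.
    rewrite -mulrA -exprMn [A * g]mulrC gA ler_pM2l //.
    by apply: ler_weXn2l => //; rewrite nm.
  have WE : W = P ^+ n * g ^+ m by rewrite /W nm /= exprMn mulrA -exprS.
  rewrite mulrA ltr_pdivrMr // WE TR.
  have -> : n%:R * (P ^+ n * g ^+ m) = P ^+ n * (n%:R * g ^+ m) by ring.
  have -> : eps2 * P ^+ n * C ^+ n = P ^+ n * (eps2 * C ^+ n) by ring.
  by rewrite ltr_pM2l // exprn_gt0.
set S := \sum_i _ in totR sumB.
set Z := n%:R * _ in sumB key.
set ET := eps2 * T%:R in key.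
have -> : (1 - eps2) * T%:R = T%:R - ET by rewrite /ET; ring.
lra.
Qed.
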